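(* Let $G=(V,E)$ be a graph, $v,u$ two non-adjacent vertices of $G$, and $k$ an integer. For any $c,q\in[k]$ with $c\ne q$, the sets $S(c,c)$ and $S(q,c)$ (defined in the context) are isomorphic, and the map $H(\cdot,q):S(c,c)\to S(q,c)$ is a bijection.
   Context: $[k]=\{1,\dots,k\}$; $\Omega$ is the set of proper $k$-colourings of $G$, $\sigma_w$ the colour of $w$ under $\sigma$, and $\Omega(c,q)\subseteq\Omega$ the colourings with $\sigma_v=c$ and $\sigma_u=q$. For $\sigma\in\Omega$ and $q\in[k]\setminus\{\sigma_v\}$, the disagreement graph $Q_{\sigma_v,q}$ is the subgraph of $G$ induced by all vertices $x$ such that there is a path $v=w_0,\dots,w_t=x$ in $G$ with $\sigma_{w_j}\in\{\sigma_v,q\}$ for all $j$. The $q$-switching $H(\sigma,q)$ is obtained from $\sigma$ by recolouring with $q$ every vertex of $Q_{\sigma_v,q}$ coloured $\sigma_v$ and recolouring with $\sigma_v$ every vertex of $Q_{\sigma_v,q}$ coloured $q$, all other vertices keeping their colour. $S(c,c)$ is the set of $\sigma\in\Omega(c,c)$ such that $u\notin Q_{\sigma_v,q}$; $S(q,c)$ is the set of $\sigma\in\Omega(q,c)$ such that $u\notin Q_{\sigma_v,c}$. Two sets are isomorphic if there is a bijection between them. *)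

(* Defs.v *)
From mathcomp Require Import all_boot.
Set Implicit Arguments. Unset Strict Implicit. Unset Printing Implicit Defensive.

(* A simple graph on the finite vertex type T is a symmetric irreflexive
   relation e.  Colours [k] are represented by 'I_k. *)

Definition colouring (T : finType) (k : nat) := {ffun T -> 'I_k}.

Definition proper (T : finType) (e : rel T) (k : nat) (s : {ffun T -> 'I_k}) :=
  [forall x, forall y, e x y ==> (s x != s y)].

Definition Omega_cq (T : finType) (e : rel T) (k : nat) (v u : T) (c q : 'I_k)
  : {set {ffun T -> 'I_k}} :=
  [set s | proper e s && (s v == c) && (s u == q)].

Definition dis_rel (T : finType) (e : rel T) (k : nat) (s : {ffun T -> 'I_k})
  (a q : 'I_k) : rel T :=
  [rel x y | [&& e x y, (s x == a) || (s x == q) & (s y == a) || (s y == q)]].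

Definition Qset (T : finType) (e : rel T) (k : nat) (v : T)
  (s : {ffun T -> 'I_k}) (q : 'I_k) : {set T} :=
  [set x | connect (dis_rel e s (s v) q) v x].

Definition Hswitch (T : finType) (e : rel T) (k : nat) (v : T)
  (s : {ffun T -> 'I_k}) (q : 'I_k) : {ffun T -> 'I_k} :=
  [ffun x => if x \in Qset e v s q then
               (if s x == s v then q else if s x == q then s v else s x)
             else s x].

Definition S_cc (T : finType) (e : rel T) (k : nat) (v u : T) (c q : 'I_k)
  : {set {ffun T -> 'I_k}} :=
  [set s in Omega_cq e v u c c | u \notin Qset e v s q].

Definition S_qc (T : finType) (e : rel T) (k : nat) (v u : T) (c q : 'I_k)
  : {set {ffun T -> 'I_k}} :=
  [set s in Omega_cq e v u q c | u \notin Qset e v s c].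

(* Main.v *)
Require Import Defs.
From mathcomp Require Import all_boot.
Set Implicit Arguments. Unset Strict Implicit.

Section Aux.
Variables (T : finType) (e : rel T) (k : nat) (v : T).

Lemma Q_col (s : {ffun T -> 'I_k}) (b : 'I_k) x :
  x \in Qset e v s b -> (s x == s v) || (s x == b).
Proof.
rewrite inE => /connectP [p Hp ->].
set a := s v in Hp *.
have : (s v == a) || (s v == b) by rewrite eqxx.
elim: p (v) Hp => [|z p IH] y //= /andP [Hyz Hp] _.
apply: IH Hp _. by case/and3P: Hyz.
Qed.

Lemma Q_ext (s : {ffun T -> 'I_k}) (b : 'I_k) x y :
  x \in Qset e v s b -> e x y -> (s y == s v) || (s y == b) ->
  y \in Qset e v s b.
Proof.
move=> Hx Hxy Hy; move: (Hx); rewrite !inE => Hc.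
apply: (connect_trans Hc); apply: connect1.
by rewrite /dis_rel /= Hxy Hy (Q_col Hx).
Qed.

Lemma H_out (s : {ffun T -> 'I_k}) b x : x \notin Qset e v s b ->
  Hswitch e v s b x = s x.
Proof. by rewrite /Hswitch ffunE => /negbTE ->. Qed.

Lemma H_v (s : {ffun T -> 'I_k}) b : Hswitch e v s b v = b.
Proof.
rewrite /Hswitch ffunE eqxx.
suff -> : v \in Qset e v s b by [].
by rewrite inE connect0.
Qed.

Lemma H_Q (s : {ffun T -> 'I_k}) b : s v != b ->
  Qset e v (Hswitch e v s b) (s v) = Qset e v s b.
Proof.
move=> hab; apply/setP => x; rewrite !inE H_v.
suff Heq : dis_rel e (Hswitch e v s b) b (s v) =2 dis_rel e s (s v) b.
  by rewrite (eq_connect Heq).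
have Hc : forall z, ((Hswitch e v s b z == b) || (Hswitch e v s b z == s v)) =
                    ((s z == s v) || (s z == b)).
  move=> z; case: (boolP (z \in Qset e v s b)) => Hz.
    have := Q_col Hz; rewrite /Hswitch ffunE Hz.
    have hba : b != s v by rewrite eq_sym.
    by case/orP => /eqP ->; rewrite ?eqxx ?(negbTE hab) ?(negbTE hba) ?eqxx /= ?orbT.
  by rewrite (H_out Hz) // orbC.
by move=> y z; rewrite /dis_rel /= !Hc.
Qed.

Lemma H_inv (s : {ffun T -> 'I_k}) b : s v != b ->
  Hswitch e v (Hswitch e v s b) (s v) = s.
Proof.
move=> hab; apply/ffunP => x.
rewrite {1}/Hswitch ffunE H_Q // H_v.
case: (boolP (x \in Qset e v s b)) => Hx; last by rewrite H_out.
have := Q_col Hx; rewrite /Hswitch ffunE Hx.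
have hba : b != s v by rewrite eq_sym.
by case/orP => /eqP ->; rewrite ?eqxx ?(negbTE hab) ?(negbTE hba) ?eqxx ?(negbTE hab) ?(negbTE hba) ?eqxx.
Qed.

Lemma H_proper (e_sym : symmetric e) (s : {ffun T -> 'I_k}) b : s v != b -> Defs.proper e s ->
  Defs.proper e (Hswitch e v s b).
Proof.
move=> hab /forallP Hp; apply/forallP => x; apply/forallP => y.
apply/implyP => Hxy; have := forallP (Hp x) y; rewrite Hxy /= => Hs.
have swap_ne : forall z w, z \in Qset e v s b -> w \in Qset e v s b ->
   s z != s w -> Hswitch e v s b z != Hswitch e v s b w.
  move=> z w Hz Hw; have := Q_col Hz; have := Q_col Hw.
  rewrite /Hswitch !ffunE Hz Hw.
  have hba : b != s v by rewrite eq_sym.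
  by case/orP => /eqP ->; case/orP => /eqP ->; rewrite ?eqxx ?(negbTE hab) ?(negbTE hba) ?eqxx.
have mixed : forall z w, z \in Qset e v s b -> w \notin Qset e v s b -> e z w ->
   Hswitch e v s b z != Hswitch e v s b w.
  move=> z w Hz Hw Hzw; rewrite (H_out Hw).
  have Hsw : ~~ ((s w == s v) || (s w == b)).
    by apply/negP => H; move: Hw; rewrite (Q_ext Hz Hzw H).
  apply/negP => /eqP E; move: Hsw; rewrite -E.
  have := Q_col Hz; rewrite /Hswitch ffunE Hz.
  have hba : b != s v by rewrite eq_sym.
  by case/orP => /eqP ->; rewrite ?eqxx ?(negbTE hab) ?(negbTE hba) ?eqxx ?orbT.
case: (boolP (x \in Qset e v s b)) => Hx; case: (boolP (y \in Qset e v s b)) => Hy.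
- exact: swap_ne.
- exact: mixed.
- rewrite eq_sym; apply: mixed => //.
  by rewrite e_sym.
- by rewrite !H_out.
Qed.
End Aux.

Theorem lemma2 (T : finType) (e : rel T) (k : nat) (v u : T)
  (e_sym : symmetric e) (e_irr : irreflexive e)
  (vu_neq : v != u) (vu_nadj : ~~ e v u)
  (c q : 'I_k) (cq : c != q) :
  (exists f : {ffun T -> 'I_k} -> {ffun T -> 'I_k},
     [/\ {in S_cc e v u c q, forall s, f s \in S_qc e v u c q},
         {in S_cc e v u c q &, injective f}
       & {in S_qc e v u c q, forall t, exists2 s, s \in S_cc e v u c q & f s = t}])
  /\ [/\ {in S_cc e v u c q, forall s, Hswitch e v s q \in S_qc e v u c q},
         {in S_cc e v u c q &, injective (fun s => Hswitch e v s q)}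
       & {in S_qc e v u c q, forall t,
            exists2 s, s \in S_cc e v u c q & Hswitch e v s q = t}].
Proof.
suff H : [/\ {in S_cc e v u c q, forall s, Hswitch e v s q \in S_qc e v u c q},
         {in S_cc e v u c q &, injective (fun s => Hswitch e v s q)}
       & {in S_qc e v u c q, forall t,
            exists2 s, s \in S_cc e v u c q & Hswitch e v s q = t}].
  by split=> //; exists (fun s => Hswitch e v s q).
have qc : q != c by rewrite eq_sym.
split.
- move=> s Hs; rewrite !inE in Hs; case/andP: Hs => /andP [/andP [Hp /eqP Hv] /eqP Hu] Hq.
  have hab : s v != q by rewrite Hv.
  have Hqm : u \notin Qset e v s q by rewrite inE.
  rewrite /S_qc /Omega_cq !in_set.
  have HQ : Qset e v (Hswitch e v s q) c = Qset e v s q by rewrite -Hv H_Q.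
  have HQ' := f_equal (fun A : {set T} => u \in A) HQ; rewrite /= !inE in HQ'; rewrite HQ'.
  by rewrite (H_proper e_sym hab Hp) H_v eqxx (H_out Hqm) Hu eqxx Hq.
- move=> s1 s2; rewrite !inE => /andP [/andP [/andP [_ /eqP Hv1] _] _].
  move=> /andP [/andP [/andP [_ /eqP Hv2] _] _] /= E.
  have hab1 : s1 v != q by rewrite Hv1.
  have hab2 : s2 v != q by rewrite Hv2.
  by rewrite -(@H_inv _ e _ v _ _ hab1) -(@H_inv _ e _ v _ _ hab2) E Hv1 Hv2.
- move=> t Ht; rewrite !inE in Ht; case/andP: Ht => /andP [/andP [Hp /eqP Hv] /eqP Hu] Hq.
  have hab : t v != c by rewrite Hv.
  have Hqm : u \notin Qset e v t c by rewrite inE.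
  exists (Hswitch e v t c); last by rewrite -Hv H_inv.
  rewrite /S_cc /Omega_cq !in_set.
  have HQ : Qset e v (Hswitch e v t c) q = Qset e v t c by rewrite -Hv H_Q.
  have HQ' := f_equal (fun A : {set T} => u \in A) HQ; rewrite /= !inE in HQ'; rewrite HQ'.
  by rewrite (H_proper e_sym hab Hp) H_v eqxx (H_out Hqm) Hu eqxx Hq.
Qed.
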